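(* Fix $d \geq 1$, permutations $\rho,\sigma \in S(d)$ and an integer $r \geq 2$. Let $\mathrm{Walk}_r(\rho,\sigma)$ be the set of $r$-tuples $W = ((s_1\ t_1),\dots,(s_r\ t_r))$ of transpositions in $S(d)$, with $s_i<t_i$, such that $\sigma = \rho (s_1\ t_1)\cdots(s_r\ t_r)$. For $1 \leq i \leq r-1$, define $R_i : \mathrm{Walk}_r(\rho,\sigma) \to \mathrm{Walk}_r(\rho,\sigma)$ as follows. $R_i W$ agrees with $W$ except in positions $i$ and $i+1$, which are replaced by $(\ast\ t_{i+1}), (\ast\ t_i)$ (in that order), where: - if $t_i < t_{i+1}$, then $(\ast\ t_{i+1}) = (s_i\ t_i)(s_{i+1}\ t_{i+1})(s_i\ t_i)$ and $(\ast\ t_i) = (s_i\ t_i)$; - if $t_i > t_{i+1}$, then $(\ast\ t_{i+1}) = (s_{i+1}\ t_{i+1})$ and $(\ast\ t_i) = (s_{i+1}\ t_{i+1})(s_i\ t_i)(s_{i+1}\ t_{i+1})$; - if $t_i = t_{i+1}$, then $R_i W = W$. Then the operators $R_i$ satisfy: - $R_i^2 = I$ for $1 \leq i \leq r-1$; - $R_iR_{i+1}R_i = R_{i+1}R_iR_{i+1}$ for $1 \leq i \leq r-2$; - $R_iR_j = R_jR_i$ for $1 \leq i,j \leq r-1$ with $|i-j| \geq 2$. Moreover, if $W$ is transitive, then so is $R_iW$.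
   Context: A transposition of $S(d)$ is written $(s\ t)$ with $s<t$. A walk $W \in \mathrm{Walk}_r(\rho,\sigma)$ is called transitive if the subgroup of $S(d)$ generated by $\rho$, $\sigma$ and the transpositions of $W$ acts transitively on $\{1,\dots,d\}$. *)

(* Defs.v *)
From mathcomp Require Import all_boot all_order all_fingroup.
Set Implicit Arguments. Unset Strict Implicit. Unset Printing Implicit Defensive.

Section Walks.
Variable d : nat.

Definition trans_of (p : 'I_d * 'I_d) : 'S_d := tperm p.1 p.2.

Definition is_trans_pair (p : 'I_d * 'I_d) : bool := (p.1 < p.2)%N.

Definition is_walk (r : nat) (rho sigma : 'S_d) (W : seq ('I_d * 'I_d)) : bool :=
  [&& size W == r, all is_trans_pair W &
      sigma == (rho * \prod_(p <- W) trans_of p)%g].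

Definition conj_pair (a b : 'I_d * 'I_d) : 'I_d * 'I_d :=
  odflt b [pick c : 'I_d * 'I_d |
            is_trans_pair c && (trans_of c == trans_of a * trans_of b * trans_of a)%g].

Definition swap_step (s : seq ('I_d * 'I_d)) : seq ('I_d * 'I_d) :=
  match s with
  | p :: q :: rest =>
      if (p.2 < q.2)%N then conj_pair p q :: p :: rest
      else if (q.2 < p.2)%N then q :: conj_pair q p :: rest
      else s
  | _ => s
  end.

(* R_i, for 1 <= i <= r-1 (1-based, as in the paper): acts on positions i, i+1 *)
Definition Rop (i : nat) (W : seq ('I_d * 'I_d)) : seq ('I_d * 'I_d) :=
  take i.-1 W ++ swap_step (drop i.-1 W).

Definition transitive_walk (rho sigma : 'S_d) (W : seq ('I_d * 'I_d)) : Prop :=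
  [transitive <<[set rho; sigma] :|: [set trans_of p | p in W]>>, on [set: 'I_d] | 'P].

End Walks.

(* Main.v *)
Require Import Defs.
From mathcomp Require Import all_boot all_order all_fingroup.
From mathcomp Require Import zify.
Set Implicit Arguments. Unset Strict Implicit. Unset Printing Implicit Defensive.

Section S.
Variable d : nat.
Local Notation P := ('I_d * 'I_d)%type.
Local Notation E := ('S_d * nat)%type.

Lemma trans_inj (p q : P) : is_trans_pair p -> is_trans_pair q ->
  trans_of p = trans_of q -> p = q.
Proof.
case: p q => [p1 p2] [q1 q2]; rewrite /is_trans_pair /trans_of /= => hp hq e.
have := congr1 (fun s : 'S_d => s p1) e; rewrite /= tpermL.
case: tpermP => [e1 | e1 | _ e1] e2.
- by rewrite e1 e2.
- by move: hp hq; rewrite e1 e2; lia.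
- by move: hp; rewrite e2; lia.
Qed.

Lemma conj_spec (a b : P) : is_trans_pair a -> is_trans_pair b -> (a.2 < b.2)%N ->
  [/\ is_trans_pair (conj_pair a b), (conj_pair a b).2 = b.2 &
      trans_of (conj_pair a b) = (trans_of a * trans_of b * trans_of a)%g].
Proof.
move=> ha hb hab.
pose c0 : P := (trans_of a b.1, b.2).
have vc0 : is_trans_pair c0.
  rewrite /is_trans_pair /c0 /trans_of /=.
  move: ha hb; rewrite /is_trans_pair.
  case: tpermP => [_|_|_ _] ? ?; lia.
have ec0 : trans_of c0 = (trans_of a * trans_of b * trans_of a)%g.
  rewrite /c0 /trans_of /=.
  have -> : (tperm a.1 a.2 * tperm b.1 b.2 * tperm a.1 a.2 = tperm b.1 b.2 ^ tperm a.1 a.2)%g.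
    by rewrite /conjg tpermV mulgA.
  rewrite tpermJ (@tpermD _ a.1 a.2 b.2) //.
  - apply/eqP => h; move: ha; rewrite /is_trans_pair h; lia.
  - apply/eqP => h; move: hab; rewrite h; lia.
have -> : conj_pair a b = c0.
  rewrite /conj_pair; case: pickP => [c /andP[hc /eqP ec] | none] /=.
    by apply: trans_inj => //; rewrite ec ec0.
  by move: (none c0); rewrite vc0 ec0 eqxx.
by split.
Qed.


Definition phi (p : P) : E := (trans_of p, val p.2).

Definition mstep (s : seq E) : seq E :=
  match s with
  | x :: y :: rest =>
      if (x.2 < y.2)%N then (x.1 * y.1 * x.1, y.2)%g :: x :: rest
      else if (y.2 < x.2)%N then y :: (y.1 * x.1 * y.1, x.2)%g :: rest
      else s
  | _ => s
  end.

Definition MRop (i : nat) (s : seq E) := take i.-1 s ++ mstep (drop i.-1 s).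

Lemma swap_ok (s : seq P) : all (@is_trans_pair d) s ->
  all (@is_trans_pair d) (swap_step s) /\ map phi (swap_step s) = mstep (map phi s).
Proof.
case: s => [|a [|b rest]] //= /and3P[ha hb hr].
case: ltngtP => h /=.
- have [c1 c2 c3] := conj_spec ha hb h.
  by split; [apply/and3P | rewrite /phi c2 c3].
- have [c1 c2 c3] := conj_spec hb ha h.
  by split; [apply/and3P | rewrite /phi c2 c3].
- by rewrite ha hb hr.
Qed.

Lemma Rop_ok i (s : seq P) : all (@is_trans_pair d) s ->
  all (@is_trans_pair d) (Rop i s) /\ map phi (Rop i s) = MRop i (map phi s).
Proof.
move=> hs; rewrite /Rop /MRop.
have hd : all (@is_trans_pair d) (drop i.-1 s) by rewrite -(cat_take_drop i.-1 s) all_cat in hs; case/andP: hs.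
have ht : all (@is_trans_pair d) (take i.-1 s) by rewrite -(cat_take_drop i.-1 s) all_cat in hs; case/andP: hs.
have [h1 h2] := swap_ok hd.
by rewrite all_cat ht h1 map_cat h2 map_take map_drop.
Qed.

Lemma map_phi_inj (s t : seq P) : all (@is_trans_pair d) s -> all (@is_trans_pair d) t ->
  map phi s = map phi t -> s = t.
Proof.
elim: s t => [|a s IH] [|b t] //= /andP[ha hs] /andP[hb ht] [e1 _ e2].
by rewrite (trans_inj ha hb e1) (IH t hs ht e2).
Qed.

End S.
Lemma mbraid3 d (x y z : 'S_d) tx ty tz rest :
  (x * x = 1)%g -> (y * y = 1)%g -> (z * z = 1)%g ->
  MRop 1 (MRop 2 (MRop 1 ((x,tx)::(y,ty)::(z,tz)::rest))) =
  MRop 2 (MRop 1 (MRop 2 ((x,tx)::(y,ty)::(z,tz)::rest))).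
Proof.
move=> hx hy hz.
have cx : forall w, (w * x * x = w)%g by move=> w; rewrite -mulgA hx mulg1.
have cy : forall w, (w * y * y = w)%g by move=> w; rewrite -mulgA hy mulg1.
have cz : forall w, (w * z * z = w)%g by move=> w; rewrite -mulgA hz mulg1.
rewrite /MRop /=.
repeat (case: ifP => ? /=); try (exfalso; lia).
all: rewrite ?mulgA; do 10? rewrite ?hx ?hy ?hz ?cx ?cy ?cz ?mul1g //.
Qed.

Section M.
Variable d : nat.
Local Notation E := ('S_d * nat)%type.
Implicit Types (s u v w : seq E).

Lemma mstep_size s : size (mstep s) = size s.
Proof. case: s => [|a [|b r]] //=; by case: ifP => _ //; case: ifP. Qed.

Lemma mstep_cat u v : (2 <= size u)%N -> mstep (u ++ v) = mstep u ++ v.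
Proof. case: u => [|a [|b r]] //= _; by case: ifP => _ //; case: ifP. Qed.

Lemma mstep_short s : (size s <= 1)%N -> mstep s = s.
Proof. by case: s => [|a [|b r]]. Qed.

Lemma MRop_cat k n u v : size u = k ->
  MRop (k + n).+1 (u ++ v) = u ++ MRop n.+1 v.
Proof.
move=> su; rewrite /MRop /= take_cat drop_cat su ltnNge leq_addr /= addKn.
by rewrite catA.
Qed.

Lemma MRop_catl k u v : (k + 2 <= size u)%N ->
  MRop k.+1 (u ++ v) = MRop k.+1 u ++ v.
Proof.
move=> su; rewrite /MRop /= take_cat drop_cat.
have -> : (k < size u)%N by lia.
rewrite mstep_cat ?catA // size_drop; lia.
Qed.

Lemma MRop_size k s : size (MRop k s) = size s.
Proof.
by rewrite /MRop size_cat mstep_size -size_cat cat_take_drop.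
Qed.

Lemma MRop_short k s : (size s <= k.+1)%N -> MRop k.+1 s = s.
Proof.
move=> h; rewrite /MRop /= mstep_short ?cat_take_drop // size_drop; lia.
Qed.

Lemma MRop_far k l s : (k + 2 <= l)%N ->
  MRop k.+1 (MRop l.+1 s) = MRop l.+1 (MRop k.+1 s).
Proof.
move=> hkl.
case: (leqP (size s) l.+1) => hs.
  by rewrite (MRop_short hs) [RHS]MRop_short // MRop_size.
rewrite -(cat_take_drop l s).
have su : size (take l s) = l by rewrite size_takel; lia.
have e : forall v, MRop l.+1 (take l s ++ v) = take l s ++ MRop 1 v.
  by move=> v; have := MRop_cat 0 v su; rewrite addn0.
rewrite e MRop_catl ?su // MRop_catl ?su //.
have sk : size (MRop k.+1 (take l s)) = l by rewrite MRop_size.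
by have := MRop_cat 0 (drop l s) sk; rewrite addn0.
Qed.

Definition invol (e : E) := (e.1 * e.1 == 1)%g.

Lemma MRop_invol k s : all invol s -> MRop k.+1 (MRop k.+1 s) = s.
Proof.
move=> hs.
case: (leqP (size s) k) => h.
  by rewrite !MRop_short ?MRop_size //; lia.
rewrite -(cat_take_drop k s).
have su : size (take k s) = k by rewrite size_takel; lia.
have hv : all invol (drop k s) by rewrite -(cat_take_drop k s) all_cat in hs; case/andP: hs.
have e : forall v, MRop k.+1 (take k s ++ v) = take k s ++ MRop 1 v.
  by move=> v; have := MRop_cat 0 v su; rewrite addn0.
rewrite !e; congr (_ ++ _).
move: hv; case: (drop k s) => [|[x tx] [|[y ty] r]] //= /and3P[/eqP hx /eqP hy _].
move: hx hy => /= hx hy.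
rewrite /MRop /=.
have cx : forall g, (g * x * x = g)%g by move=> g; rewrite -mulgA hx mulg1.
have cy : forall g, (g * y * y = g)%g by move=> g; rewrite -mulgA hy mulg1.
repeat (case: ifP => ? /=); try (exfalso; lia).
all: rewrite ?mulgA; do 4? rewrite ?hx ?hy ?cx ?cy ?mul1g //.
Qed.

Lemma MRop_braid k s : (k + 3 <= size s)%N -> all invol s ->
  MRop k.+1 (MRop k.+2 (MRop k.+1 s)) = MRop k.+2 (MRop k.+1 (MRop k.+2 s)).
Proof.
move=> h hs.
rewrite -(cat_take_drop k s).
have su : size (take k s) = k by rewrite size_takel; lia.
have hv : all invol (drop k s) by rewrite -(cat_take_drop k s) all_cat in hs; case/andP: hs.
have hsz : (3 <= size (drop k s))%N by rewrite size_drop; lia.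
have e1 : forall v, MRop k.+1 (take k s ++ v) = take k s ++ MRop 1 v.
  by move=> v; have := MRop_cat 0 v su; rewrite addn0.
have e2 : forall v, MRop k.+2 (take k s ++ v) = take k s ++ MRop 2 v.
  by move=> v; have := MRop_cat 1 v su; rewrite addn1.
rewrite !(e1, e2); congr (_ ++ _).
move: hv hsz; case: (drop k s) => [|[x tx] [|[y ty] [|[z tz] r]]] //= /and4P[/eqP hx /eqP hy /eqP hz _] _.
exact: mbraid3.
Qed.

End M.

Section F.
Variable d : nat.
Local Notation P := ('I_d * 'I_d)%type.
Local Notation E := ('S_d * nat)%type.

Lemma Rop_valid i (s : seq P) : all (@is_trans_pair d) s -> all (@is_trans_pair d) (Rop i s).
Proof. by move=> h; case: (Rop_ok i h). Qed.
Lemma Rop_phi i (s : seq P) : all (@is_trans_pair d) s -> map (@phi d) (Rop i s) = MRop i (map (@phi d) s).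
Proof. by move=> h; case: (Rop_ok i h). Qed.
Lemma phi_invol (s : seq P) : all (@invol d) (map (@phi d) s).
Proof. by rewrite all_map; apply/allP => p _; rewrite /= /invol /= tperm2. Qed.

Lemma mstep_prod (s : seq E) : all (@invol d) s ->
  (\prod_(e <- mstep s) e.1 = \prod_(e <- s) e.1)%g.
Proof.
case: s => [|[x tx] [|[y ty] r]] //= /and3P[/eqP /= hx /eqP /= hy _].
case: ifP => _; last case: ifP => _.
- by rewrite !big_cons /= !mulgA -[(x * y * x * x)%g]mulgA hx mulg1.
- by rewrite !big_cons /= !mulgA hy mul1g.
- by [].
Qed.

Lemma MRop_prod i (s : seq E) : all (@invol d) s ->
  (\prod_(e <- MRop i s) e.1 = \prod_(e <- s) e.1)%g.
Proof.
move=> hs; rewrite /MRop big_cat mstep_prod.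
  by rewrite -big_cat cat_take_drop.
by rewrite -(cat_take_drop i.-1 s) all_cat in hs; case/andP: hs.
Qed.

Lemma MRop_gen i (s : seq E) : all (@invol d) s ->
  forall x, x \in [seq e.1 | e <- s] ->
  x \in <<[set y in [seq e.1 | e <- MRop i s]]>>%g.
Proof.
move=> hs x.
set G := <<_>>%g.
have inG : forall y, y \in [seq e.1 | e <- MRop i s] -> y \in G.
  by move=> y hy; apply: mem_gen; rewrite inE.
rewrite -(cat_take_drop i.-1 s) map_cat mem_cat => /orP[hx|hx].
  by apply: inG; rewrite /MRop map_cat mem_cat hx.
have hv : all (@invol d) (drop i.-1 s) by rewrite -(cat_take_drop i.-1 s) all_cat in hs; case/andP: hs.
have inG' : forall y, y \in [seq e.1 | e <- mstep (drop i.-1 s)] -> y \in G.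
  by move=> y hy; apply: inG; rewrite /MRop map_cat mem_cat hy orbT.
move: hv hx inG'; case: (drop i.-1 s) => [|[a ta] [|[b tb] r]] /=; try by move=> _ hx h; apply: h.
move=> /and3P[/eqP /= ha /eqP /= hb _] hx h.
move: h; case: ifP => _; last case: ifP => _; move=> h; try by apply: h.
- have gA : a \in G by apply: h; rewrite !inE eqxx orbT.
  have gC : (a * b * a)%g \in G by apply: h; rewrite !inE eqxx.
  move: hx; rewrite !inE => /orP[/eqP ->//|/orP[/eqP ->|hr]].
    have -> : b = (a * (a * b * a) * a)%g by rewrite !mulgA ha mul1g -mulgA ha mulg1.
    by apply: groupM => //; apply: groupM.
  by apply: h; rewrite !inE hr !orbT.
- have gB : b \in G by apply: h; rewrite !inE eqxx.
  have gC : (b * a * b)%g \in G by apply: h; rewrite !inE eqxx orbT.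
  move: hx; rewrite !inE => /orP[/eqP ->|/orP[/eqP ->//|hr]].
    have -> : a = (b * (b * a * b) * b)%g by rewrite !mulgA hb mul1g -mulgA hb mulg1.
    by apply: groupM => //; apply: groupM.
  by apply: h; rewrite !inE hr !orbT.
Qed.

End F.

Lemma trans_set d (W : seq ('I_d * 'I_d)) :
  [set trans_of p | p in W] = [set y in [seq e.1 | e <- map (@phi d) W]].
Proof.
apply/setP => x; rewrite inE -map_comp.
apply/imsetP/mapP => [[p hp ->]|[p hp ->]]; by exists p.
Qed.

Lemma gen_incl d (rho sigma : 'S_d) i (W : seq ('I_d * 'I_d)) :
  all (@is_trans_pair d) W ->
  (<<[set rho; sigma] :|: [set trans_of p | p in W]>> \subset
   <<[set rho; sigma] :|: [set trans_of p | p in Rop i W]>>)%g.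
Proof.
move=> hW; rewrite gen_subG; apply/subsetP => x; rewrite inE => /orP[hx|hx].
  by apply: mem_gen; rewrite inE hx.
rewrite trans_set inE in hx.
have := MRop_gen i (phi_invol W) hx; rewrite -Rop_phi // -trans_set.
by apply/subsetP; apply: genS; apply: subsetUr.
Qed.

Theorem proposition2p1 (d : nat) (hd : (1 <= d)%N) (rho sigma : 'S_d) (r : nat)
  (hr : (2 <= r)%N) :
  (forall i, (1 <= i <= r - 1)%N -> forall W,
     is_walk r rho sigma W -> is_walk r rho sigma (Rop i W)) /\
  (forall i, (1 <= i <= r - 1)%N -> forall W,
     is_walk r rho sigma W -> Rop i (Rop i W) = W) /\
  (forall i, (1 <= i <= r - 2)%N -> forall W,
     is_walk r rho sigma W ->
     Rop i (Rop i.+1 (Rop i W)) = Rop i.+1 (Rop i (Rop i.+1 W))) /\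
  (forall i j, (1 <= i <= r - 1)%N -> (1 <= j <= r - 1)%N ->
     (i + 2 <= j \/ j + 2 <= i)%N -> forall W,
     is_walk r rho sigma W -> Rop i (Rop j W) = Rop j (Rop i W)) /\
  (forall i, (1 <= i <= r - 1)%N -> forall W,
     is_walk r rho sigma W -> transitive_walk rho sigma W ->
     transitive_walk rho sigma (Rop i W)).
Proof.
have invo : forall i W, (1 <= i)%N -> all (@is_trans_pair d) W -> Rop i (Rop i W) = W.
  move=> [|k] W // _ hW; apply: map_phi_inj; rewrite ?Rop_valid //.
  by rewrite !Rop_phi ?Rop_valid // MRop_invol // phi_invol.
split; [|split; [|split; [|split]]].
- move=> i _ W /and3P[/eqP sW hW /eqP hs]; apply/and3P; split.
  + by rewrite -(size_map (@phi d)) Rop_phi // MRop_size size_map sW.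
  + exact: Rop_valid.
  + apply/eqP; rewrite hs; congr (_ * _)%g.
    rewrite -[LHS](big_map (@phi d) xpredT (fun e => e.1)).
    rewrite -[RHS](big_map (@phi d) xpredT (fun e => e.1)).
    by rewrite Rop_phi // MRop_prod // phi_invol.
- move=> i /andP[hi _] W /and3P[_ hW _]; exact: invo.
- move=> [|k] // /andP[_ hk] W /and3P[/eqP sW hW _].
  apply: map_phi_inj; rewrite ?Rop_valid //.
  rewrite !Rop_phi ?Rop_valid // MRop_braid ?phi_invol // size_map sW; lia.
- have far : forall i j W, (1 <= i)%N -> (i + 2 <= j)%N -> all (@is_trans_pair d) W ->
      Rop i (Rop j W) = Rop j (Rop i W).
    move=> [|k] [|l] W // _ hkl hW.
    apply: map_phi_inj; rewrite ?Rop_valid //.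
    rewrite !Rop_phi ?Rop_valid // MRop_far //; lia.
  move=> i j /andP[hi _] /andP[hj _] [h|h] W /and3P[_ hW _].
    exact: far.
  by symmetry; apply: far.
- move=> i /andP[hi _] W /and3P[_ hW _].
  rewrite /transitive_walk.
  have -> : <<[set rho; sigma] :|: [set trans_of p | p in Rop i W]>>%g =
            <<[set rho; sigma] :|: [set trans_of p | p in W]>>%g.
    apply/eqP; rewrite eqEsubset gen_incl ?Rop_valid //.
    by rewrite -{2}(invo i W hi hW) gen_incl ?Rop_valid.
  by [].
Qed.
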